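(* Let $k\geq3$, $A=\{0,1,\dots,k-1\}$, $N=k-1$ and let $T\colon A^{N^2}\to A$ be given by $T(x_{1,1},\dots,x_{1,N},\dots,x_{N,1},\dots,x_{N,N})=1$ if $x_{i,j}=i$ for all $i,j$ or $x_{i,j}=j$ for all $i,j$, and $0$ otherwise. Then for all $1\leq n<k-1$, \[\{T\}^{**(n)}=\{T\}^{*(1)*(n)}=J_n(A)\cup\{c^n_0\},\] where $c^n_0$ is the $n$-ary constant zero function and $J_n(A)$ the set of $n$-ary projections.
   Context: An $m$-ary $g$ commutes with an $n$-ary $h$ if $g\bigl((h((x_{ij})_{j}))_{i}\bigr)=h\bigl((g((x_{ij})_{i}))_{j}\bigr)$ for all $(x_{ij})\in A^{m\times n}$. For a set $F$ of finitary operations on $A$ (positive arity), $F^*$ is the set of all such operations commuting with every member of $F$, and $F^{(n)}$ the set of $n$-ary members of $F$. Superscripts apply from left to right, e.g. $\{T\}^{*(1)*(n)}=(((\{T\}^* )^{(1)})^* )^{(n)}$ and $\{T\}^{**(n)}=((\{T\}^* )^* )^{(n)}$. *)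

(* Defs.v *)
From mathcomp Require Import all_boot.
Set Implicit Arguments. Unset Strict Implicit. Unset Printing Implicit Defensive.

Definition op (A : Type) (m : nat) := ('I_m -> A) -> A.

Definition fop (A : Type) := {m : nat & op A m}.

Definition opset (A : Type) := fop A -> Prop.

Definition commutes (A : Type) (m n : nat) (g : op A m) (h : op A n) : Prop :=
  forall x : 'I_m -> 'I_n -> A,
    g (fun i => h (fun j => x i j)) = h (fun j => g (fun i => x i j)).

Definition centralizer (A : Type) (F : opset A) : opset A :=
  fun p => 0 < projT1 p /\
    forall q : fop A, F q -> commutes (projT2 p) (projT2 q).

Definition arity_part (A : Type) (n : nat) (F : opset A) : opset A :=
  fun p => projT1 p = n /\ F p.

Definition singleton_op (A : Type) (m : nat) (f : op A m) : opset A :=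
  fun p => p = existT (fun m => op A m) m f.

Definition opset_eq (A : Type) (F G : opset A) : Prop := forall p, F p <-> G p.

Definition proj_or_const0 (k n : nat) : opset 'I_k :=
  fun p => projT1 p = n /\
    ((exists i : 'I_(projT1 p), forall x, projT2 p x = x i) \/
     (forall x, nat_of_ord (projT2 p x) = 0)).

(* The operation T of arity N^2, N = k-1, on A = {0,...,k-1}.
   Argument index r*N + c (0-based r, c < N) holds x_{r+1,c+1}.
   T x = 1 if x_{i,j} = i for all i,j or x_{i,j} = j for all i,j, else 0. *)
Definition T_op (k : nat) (hk : 2 < k) : op 'I_k ((k-1) * (k-1)) :=
  fun x =>
    if [forall t : 'I_((k-1) * (k-1)), nat_of_ord (x t) == t %/ (k-1) + 1]
       || [forall t : 'I_((k-1) * (k-1)), nat_of_ord (x t) == t %% (k-1) + 1]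
    then Ordinal (ltnW hk : 1 < k)
    else Ordinal (ltnW (ltnW hk) : 0 < k).
Arguments proj_or_const0 : clear implicits.

(* Main.v *)
Require Import Defs.
From mathcomp Require Import all_boot.
From mathcomp Require Import zify.
From Stdlib Require Import FunctionalExtensionality.

Set Implicit Arguments. Unset Strict Implicit. Unset Printing Implicit Defensive.

Definition zk k (hk : 2 < k) : 'I_k := Ordinal (ltnW (ltnW hk)).

Definition fx k (hk : 2 < k) n (x : 'I_n -> 'I_k) (a : 'I_k) : 'I_k :=
  if 2 <= a then (match (insub (a - 2) : option 'I_n) with Some i => x i | None => zk hk end)
  else zk hk.

Lemma fx_cases k (hk : 2 < k) n (x : 'I_n -> 'I_k) a :
  fx hk x a = zk hk \/ exists i, fx hk x a = x i.
Proof.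
rewrite /fx; case: ifP => _; last by left.
case: insubP => [i _ _|_]; [by right; exists i | by left].
Qed.

Lemma fx_small k (hk : 2 < k) n (x : 'I_n -> 'I_k) (a : 'I_k) : a < 2 -> fx hk x a = zk hk.
Proof. by move=> h; rewrite /fx leqNgt h. Qed.

Lemma fx_e k (hk : 2 < k) n (x : 'I_n -> 'I_k) (i : 'I_n) (h : i + 2 < k) :
  fx hk x (Ordinal h) = x i.
Proof.
rewrite /fx /= leq_addl addnK.
case: insubP => [j _ hj|]; first by congr x; apply/val_inj.
by rewrite ltn_ord.
Qed.

Lemma noinj k (hk : 2 < k) n (hn : n < k - 1) (x : 'I_n -> 'I_k) (y : 'I_(k-1) -> 'I_k) :
  (forall r, nat_of_ord (fx hk x (y r)) = r + 1) -> False.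
Proof.
move=> hy.
have hinj : injective (fun r => fx hk x (y r)).
  move=> r1 r2 /(congr1 val) /=; rewrite !hy => /eqP; rewrite eqn_add2r => /eqP h.
  exact: val_inj.
have: #|[set fx hk x (y r) | r : 'I_(k-1)]| <= #|[set x i | i : 'I_n]|.
  apply: subset_leq_card; apply/subsetP => _ /imsetP [r _ ->].
  case: (fx_cases hk x (y r)) => [E|[i ->]]; last by apply/imsetP; exists i.
  by have := hy r; rewrite E /= addn1.
rewrite card_imset // cardT size_enum_ord => h.
have := leq_trans h (leq_imset_card _ _).
rewrite cardT size_enum_ord. lia.
Qed.

Lemma Tconst k (hk : 2 < k) (c : 'I_k) : nat_of_ord (T_op hk (fun _ => c)) = 0.
Proof.
have hN : 1 < k - 1 by lia.
have hP : 0 < (k-1)*(k-1) by rewrite muln_gt0 (ltnW hN).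
rewrite /T_op; case: ifP => //; case/orP => /forallP H.
- have h0 := H (Ordinal hP).
  have h1 := H (Ordinal (ltn_Pmull hN (ltnW hN))).
  move: h0 h1 => /= /eqP -> /eqP; rewrite div0n divnn (ltnW hN). by [].
- have h0 := H (Ordinal hP).
  have h1 := H (Ordinal (leq_trans hN (ltnW (ltn_Pmull hN (ltnW hN))) : 1 < (k-1)*(k-1))).
  move: h0 h1 => /= /eqP -> /eqP; rewrite mod0n modn_small //.
Qed.

Lemma Tnm k (hk : 2 < k) n (hn : n < k - 1) (x : 'I_n -> 'I_k)
  (y : 'I_((k-1)*(k-1)) -> 'I_k) : T_op hk (fun t => fx hk x (y t)) = zk hk.
Proof.
have hN : 0 < k - 1 by lia.
rewrite /T_op; case: ifP => [/orP [] /forallP H|_]; last by [].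
- have wlt : forall r : 'I_(k-1), r * (k-1) < (k-1)*(k-1).
    by move=> r; rewrite ltn_mul2r ltn_ord hN.
  exfalso; refine (@noinj _ hk _ hn x (fun r => y (Ordinal (wlt r))) _) => r.
  by have := H (Ordinal (wlt r)); move=> /= /eqP ->; rewrite mulnK.
- have wlt : forall r : 'I_(k-1), r < (k-1)*(k-1).
    by move=> r; apply: (leq_trans (ltn_ord r)); rewrite leq_pmulr.
  exfalso; refine (@noinj _ hk _ hn x (fun r => y (Ordinal (wlt r))) _) => r.
  by have := H (Ordinal (wlt r)); move=> /= /eqP ->; rewrite modn_small.
Qed.

Definition ux k (hk : 2 < k) n (x : 'I_n -> 'I_k) : op 'I_k 1 :=
  fun a => fx hk x (a ord0).

Lemma ux_cent k (hk : 2 < k) n (hn : n < k - 1) (x : 'I_n -> 'I_k) :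
  centralizer (singleton_op (T_op hk)) (existT _ 1 (ux hk x)).
Proof.
split => // q -> y /=; rewrite /ux /=.
rewrite (Tnm hk hn x (fun j => y ord0 j)) fx_small //.
by rewrite /T_op; case: ifP.
Qed.

Lemma sub_dir k (hk : 2 < k) n (g : op 'I_k n) : n < k - 1 ->
  (forall x : 'I_n -> 'I_k, commutes g (ux hk x)) ->
  proj_or_const0 k n (existT _ n g).
Proof.
move=> hn H.
have elt : forall i : 'I_n, i + 2 < k by move=> i; have := ltn_ord i; lia.
pose e := fun i => Ordinal (elt i).
have key : forall x, g x = fx hk x (g e).
  move=> x; have := H x (fun i _ => e i); rewrite /ux /= => <-.
  by congr g; apply: functional_extensionality => i; rewrite fx_e.
split => //=.
case E: (2 <= g e); last by right => x; rewrite key /fx E.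
case E2: (insub (g e - 2) : option 'I_n) => [i|].
- by left; exists i => x; rewrite key /fx E E2.
- by right => x; rewrite key /fx E E2.
Qed.

Lemma sup_dir k (hk : 2 < k) n (p : fop 'I_k) : proj_or_const0 k n p ->
  forall q, centralizer (singleton_op (T_op hk)) q -> commutes (projT2 p) (projT2 q).
Proof.
case: p => m g [_ /= Hp] [m' h] [/= hm hT].
have hT' := hT _ (erefl _); rewrite /commutes /= in hT'.
case: Hp => [[i Hi]|H0] x /=.
- rewrite Hi; congr h; apply: functional_extensionality => j; by rewrite Hi.
- apply: val_inj; rewrite /= H0.
  have ->: (fun j => g (fun i => x i j)) = fun _ => zk hk.
    by apply: functional_extensionality => j; apply: val_inj; rewrite /= H0.
  have := hT' (fun _ _ => zk hk) => /=.
  have ->: (fun _ : 'I_m' => T_op hk (fun _ => zk hk)) = fun _ => zk hk.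
    by apply: functional_extensionality => j; apply: val_inj; rewrite /= Tconst.
  by move=> ->; rewrite Tconst.
Qed.

Theorem lemma3p6 (k : nat) (hk : 2 < k) (n : nat) :
  1 <= n -> n < k - 1 ->
  let TT := singleton_op (T_op hk) in
  opset_eq (arity_part n (centralizer (centralizer TT))) (proj_or_const0 k n) /\
  opset_eq (arity_part n (centralizer (arity_part 1 (centralizer TT))))
           (proj_or_const0 k n).
Proof.
move=> hn1 hn TT; split => p; split.
- case: p => m g [/= hm [_ Hc]]; subst m.
  apply: (@sub_dir k hk n g hn) => x; exact: (Hc _ (ux_cent hk hn x)).
- move=> hp; split; first by case: hp.
  split; first by case: hp => [e _]; rewrite e.
  move=> q hq; exact: (sup_dir hp hq).
- case: p => m g [/= hm [_ Hc]]; subst m.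
  apply: (@sub_dir k hk n g hn) => x; exact: (Hc (existT _ 1 (ux hk x)) (conj (erefl _) (ux_cent hk hn x))).
- move=> hp; split; first by case: hp.
  split; first by case: hp => [e _]; rewrite e.
  move=> q [_ hq]; exact: (sup_dir hp hq).
Qed.
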